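(* Let $m,r$ be positive integers, let $W\in\mathbb{R}^{m\times m}$ be a fixed real symmetric matrix, and define $f:\mathbb{R}^{m\times r}\to\mathbb{R}$ by $f(U)=F(W,U):=\frac{1}{2}\|W-UU^{T}\|_{F}^{2}$. Let $\psi:\mathbb{R}^{m\times r}\rightarrow\mathbb{R}$ be the kernel \[ \psi(U):= \frac{3}{2}\|U\|_{F}^{4}+\|W\|_{F}\|U\|_{F}^{2}. \] Then for every $L\ge 1$, the pair $(f,\psi)$ is $L$-smooth adaptable on $\mathbb{R}^{m\times r}$, i.e. \[ |f(X)-f(Y)-\langle\nabla f(Y),X-Y\rangle|\le L\, D_{\psi}(X,Y)\quad \text{for all } X,Y\in\mathbb{R}^{m\times r}. \]
   Context: $\|\cdot\|_F$ is the Frobenius norm and $\langle Y_1,Y_2\rangle:=\mathrm{tr}(Y_1^{T}Y_2)$. For a differentiable function $\psi$, the Bregman distance is $D_{\psi}(X,Y):=\psi(X)-\psi(Y)-\langle\nabla\psi(Y),X-Y\rangle$. A pair $(f,\psi)$ is called $L$-smooth adaptable ($L$-smad) on a set $C$ if there is $L>0$ with $|f(x)-f(y)-\langle\nabla f(y),x-y\rangle|\le L D_{\psi}(x,y)$ for all $x,y\in C$. In the paper, $W$ is the current iterate $W^{k+1}$ of an alternating algorithm, which is symmetric. *)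

(* Defs.v *)
From HB Require Import structures.
From mathcomp Require Import all_boot all_order all_algebra.
From mathcomp Require Import all_classical all_reals all_analysis.
Set Implicit Arguments. Unset Strict Implicit. Unset Printing Implicit Defensive.
Import Order.TTheory GRing.Theory Num.Theory.
Import numFieldNormedType.Exports.
Local Open Scope ring_scope.

Definition frob_inner (R : realType) (m r : nat) (A B : 'M[R]_(m, r)) : R :=
  \tr (A^T *m B).

Definition frob_norm (R : realType) (m r : nat) (A : 'M[R]_(m, r)) : R :=
  Num.sqrt (\sum_(i < m) \sum_(j < r) A i j ^+ 2).

Definition grad (R : realType) (m r : nat) (g : 'M[R]_(m, r) -> R)
    (Y : 'M[R]_(m, r)) : 'M[R]_(m, r) :=
  \matrix_(i < m, j < r) ('D_(delta_mx i j) g Y).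

Definition bregman (R : realType) (m r : nat) (psi : 'M[R]_(m, r) -> R)
    (X Y : 'M[R]_(m, r)) : R :=
  psi X - psi Y - frob_inner (grad psi Y) (X - Y).

Definition L_smad (R : realType) (m r : nat) (f psi : 'M[R]_(m, r) -> R)
    (L : R) (C : set 'M[R]_(m, r)) : Prop :=
  [/\ 0 < L,
      (forall Y, differentiable f Y),
      (forall Y, differentiable psi Y) &
      (forall X Y, C X -> C Y ->
         `| f X - f Y - frob_inner (grad f Y) (X - Y) | <= L * bregman psi X Y)].

Definition F_obj (R : realType) (m r : nat) (W : 'M[R]_m) (U : 'M[R]_(m, r)) : R :=
  2^-1 * frob_norm (W - U *m U^T) ^+ 2.

Definition psi_kernel (R : realType) (m r : nat) (W : 'M[R]_m) (U : 'M[R]_(m, r)) : R :=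
  3 / 2 * frob_norm U ^+ 4 + frob_norm W * frob_norm U ^+ 2.

(* Main.v *)
Require Import Defs.
From HB Require Import structures.
From mathcomp Require Import all_boot all_order all_algebra.
From mathcomp Require Import all_classical all_reals all_analysis.
From mathcomp Require Import ring lra.
Import Order.TTheory GRing.Theory Num.Theory.
Import numFieldNormedType.Exports.
Local Open Scope ring_scope.
Set Implicit Arguments. Unset Strict Implicit.

Section IP.
Variable R : realType.
Local Notation ip := (@frob_inner R _ _).

Lemma ipE m n (A B : 'M[R]_(m, n)) : ip A B = \sum_i \sum_j A i j * B i j.
Proof.
rewrite /frob_inner /mxtrace exchange_big /=; apply: eq_bigr => j _.
rewrite mxE; apply: eq_bigr => i _; by rewrite !mxE.
Qed.

Lemma ipC m n (A B : 'M[R]_(m, n)) : ip A B = ip B A.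
Proof. by rewrite !ipE; apply: eq_bigr => i _; apply: eq_bigr => j _; rewrite mulrC. Qed.

Lemma ipDr m n (A B C : 'M[R]_(m, n)) : ip A (B + C) = ip A B + ip A C.
Proof.
rewrite !ipE -big_split; apply: eq_bigr => i _; rewrite -big_split.
by apply: eq_bigr => j _; rewrite mxE mulrDr.
Qed.

Lemma ipZr m n (A B : 'M[R]_(m, n)) k : ip A (k *: B) = k * ip A B.
Proof.
rewrite !ipE mulr_sumr; apply: eq_bigr => i _; rewrite mulr_sumr.
by apply: eq_bigr => j _; rewrite mxE mulrCA.
Qed.

Lemma ipNr m n (A B : 'M[R]_(m, n)) : ip A (- B) = - ip A B.
Proof. by rewrite -scaleN1r ipZr mulN1r. Qed.

Lemma ipBr m n (A B C : 'M[R]_(m, n)) : ip A (B - C) = ip A B - ip A C.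
Proof. by rewrite ipDr ipNr. Qed.

Lemma ipDl m n (A B C : 'M[R]_(m, n)) : ip (B + C) A = ip B A + ip C A.
Proof. by rewrite ipC ipDr !(ipC A). Qed.
Lemma ipZl m n (A B : 'M[R]_(m, n)) k : ip (k *: B) A = k * ip B A.
Proof. by rewrite ipC ipZr ipC. Qed.
Lemma ipNl m n (A B : 'M[R]_(m, n)) : ip (- B) A = - ip B A.
Proof. by rewrite ipC ipNr ipC. Qed.
Lemma ipBl m n (A B C : 'M[R]_(m, n)) : ip (B - C) A = ip B A - ip C A.
Proof. by rewrite ipDl ipNl. Qed.

Lemma ip_ge0 m n (A : 'M[R]_(m, n)) : 0 <= ip A A.
Proof. by rewrite ipE; apply: sumr_ge0 => i _; apply: sumr_ge0 => j _; rewrite -expr2 sqr_ge0. Qed.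

Lemma frob_sq m n (A : 'M[R]_(m, n)) : frob_norm A ^+ 2 = ip A A.
Proof.
rewrite /frob_norm sqr_sqrtr; last by rewrite -(ipE A A) ?ip_ge0 //; apply: ip_ge0.
by rewrite ipE; apply: eq_bigr => i _; apply: eq_bigr => j _; rewrite expr2.
Qed.

Lemma frob_ge0 m n (A : 'M[R]_(m, n)) : 0 <= frob_norm A.
Proof. exact: sqrtr_ge0. Qed.

Lemma ip_mulr m n p (A : 'M[R]_(m, p)) (B : 'M[R]_(m, n)) (C : 'M[R]_(n, p)) :
  ip A (B *m C) = ip (B^T *m A) C.
Proof. by rewrite /frob_inner trmx_mul trmxK mulmxA. Qed.

Lemma ip_mulr2 m n p (A : 'M[R]_(m, p)) (B : 'M[R]_(m, n)) (C : 'M[R]_(n, p)) :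
  ip A (B *m C) = ip (A *m C^T) B.
Proof. by rewrite /frob_inner trmx_mul trmxK mulmxA mxtrace_mulC mulmxA. Qed.

Lemma ip_tr m n (A B : 'M[R]_(m, n)) : ip A^T B^T = ip A B.
Proof. by rewrite /frob_inner trmxK mxtrace_mulC -mxtrace_tr trmx_mul trmxK. Qed.

Lemma ip_CS m n (A B : 'M[R]_(m, n)) : ip A B ^+ 2 <= ip A A * ip B B.
Proof.
set a := ip A A; set b := ip A B; set c := ip B B.
have ha : 0 <= a := ip_ge0 A. have hc : 0 <= c := ip_ge0 B.
have h1 := ip_ge0 (a *: B - b *: A).
have h2 := ip_ge0 (c *: A - b *: B).
have h3 := ip_ge0 (A - b *: B).
rewrite !(ipBl, ipBr, ipZl, ipZr) -/a -/c (ipC B A) -/b in h1 h2 h3.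
have [a0|a0] := eqVneq a 0.
  have [c0|c0] := eqVneq c 0.
    rewrite a0 c0 in h3 *; nra.
  have cp : 0 < c by rewrite lt0r c0.
  nra.
have ap : 0 < a by rewrite lt0r a0.
nra.
Qed.


Lemma ip_row_col m n p (A : 'M[R]_(m, n)) (B : 'M[R]_(n, p)) i j :
  (A *m B) i j = ip (row i A) (col j B)^T.
Proof. by rewrite ipE big_ord1 mxE; apply: eq_bigr => k _; rewrite !mxE. Qed.

Lemma ip_row m n (A : 'M[R]_(m, n)) i : ip (row i A) (row i A) = \sum_k A i k * A i k.
Proof. by rewrite ipE big_ord1; apply: eq_bigr => k _; rewrite !mxE. Qed.

Lemma ip_col m n (A : 'M[R]_(m, n)) j : ip (col j A)^T (col j A)^T = \sum_k A k j * A k j.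
Proof. by rewrite ipE big_ord1; apply: eq_bigr => k _; rewrite !mxE. Qed.

Lemma ip_submul m n p (A : 'M[R]_(m, n)) (B : 'M[R]_(n, p)) :
  ip (A *m B) (A *m B) <= ip A A * ip B B.
Proof.
rewrite ipE (ipE A) (ipE B) [X in _ <= _ * X]exchange_big /=.
rewrite mulr_suml; apply: ler_sum => i _; rewrite mulr_sumr; apply: ler_sum => j _.
rewrite ip_row_col -ip_row -ip_col -expr2; exact: ip_CS.
Qed.

Lemma ip_delta m n (A : 'M[R]_(m, n)) i j : ip A (delta_mx i j) = A i j.
Proof.
rewrite ipE (bigD1 i) //= (bigD1 j) //= mxE !eqxx mulr1 big1 ?addr0; last first.
  by move=> k kj; rewrite mxE eqxx (negbTE kj) mulr0.
rewrite big1 ?addr0 // => k ki; apply: big1 => l _; rewrite mxE (negbTE ki) mulr0 //.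
Qed.

Lemma ip_norm_le m n (A B : 'M[R]_(m, n)) : `|ip A B| <= frob_norm A * frob_norm B.
Proof.
rewrite -ler_sqr ?nnegrE ?mulr_ge0 ?frob_ge0 //.
by rewrite exprMn !frob_sq real_normK ?num_real // ip_CS.
Qed.

End IP.

Section Alg.
Variable R : realType.
Local Open Scope classical_set_scope.
Local Notation ip := (@frob_inner R _ _).

Lemma mx_expand m r (W : 'M[R]_m) (U V : 'M[R]_(m, r)) (h : R) :
  W - (h *: V + U) *m (h *: V + U)^T =
  (W - U *m U^T) - h *: (U *m V^T + V *m U^T) - h ^+ 2 *: (V *m V^T).
Proof.
rewrite linearD linearZ /= mulmxDl !mulmxDr -!scalemxAl -!scalemxAr scalerA.
move: (U *m U^T) (U *m V^T) (V *m U^T) (V *m V^T) => S P1 P2 B.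
apply/matrixP => i j; rewrite !mxE; ring.
Qed.

Lemma ip_expand m n (E A B : 'M[R]_(m, n)) (h : R) :
  ip (E - h *: A - h ^+ 2 *: B) (E - h *: A - h ^+ 2 *: B) =
  ip E E + (- 2 * ip E A) * h + (ip A A - 2 * ip E B) * h ^+ 2
  + (2 * ip A B) * h ^+ 3 + ip B B * h ^+ 4.
Proof.
rewrite !(ipBl, ipBr, ipZl, ipZr) (ipC A E) (ipC B E) (ipC B A); ring.
Qed.


Lemma Dpoly (V : normedModType R) (f : V -> R) (a v : V) (c0 c1 c2 c3 c4 : R) :
  (forall h : R, f (h *: v + a) = c0 + c1 * h + c2 * h ^+ 2 + c3 * h ^+ 3 + c4 * h ^+ 4) ->
  'D_v f a = c1.
Proof.
move=> E.
have fa : f a = c0.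
  have := E 0; rewrite scale0r add0r => ->.
  by rewrite !mulr0 !expr0n /= !mulr0 !addr0.
rewrite /derive.
pose p : {poly R} := c1%:P + c2%:P * 'X + c3%:P * 'X^2 + c4%:P * 'X^3.
apply: cvg_lim => //.
have hp : (horner p) @ 0^' --> c1.
  have -> : c1 = p.[0] by rewrite /p !hornerE /= !mulr0 !addr0.
  apply: cvg_within_filter.
  exact: continuous_horner.
apply: cvg_trans hp; apply: near_eq_cvg; near=> h.
rewrite /= E fa /p !hornerE.
have h0 : h != 0 by near: h; exact: nbhs_dnbhs_neq.
rewrite /GRing.scale /=.
field; exact: h0.
Unshelve. all: by end_near.
Qed.

Lemma grad_poly m r (g : 'M[R]_(m, r) -> R) (Y G : 'M[R]_(m, r))
    (c0 c2 c3 c4 : 'M[R]_(m, r) -> R) :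
  (forall V (h : R), g (h *: V + Y) =
     c0 V + ip G V * h + c2 V * h ^+ 2 + c3 V * h ^+ 3 + c4 V * h ^+ 4) ->
  grad g Y = G.
Proof.
move=> E; apply/matrixP => i j; rewrite mxE (Dpoly (E _)).
exact: ip_delta.
Qed.

Lemma shift_coef (c0 c1 c2 c3 c4 d0 d1 d2 d3 d4 : R) :
  (forall k : R, c0 + c1 * (k + 2^-1) + c2 * (k + 2^-1) ^+ 2 + c3 * (k + 2^-1) ^+ 3
      + c4 * (k + 2^-1) ^+ 4 = d0 + d1 * k + d2 * k ^+ 2 + d3 * k ^+ 3 + d4 * k ^+ 4) ->
  c2 + 3 / 2 * c3 + 3 / 2 * c4 = d2.
Proof.
move=> E.
have e0 := E 0; have e1 := E 1; have e2 := E (-1); have e3 := E 2; have e4 := E (-2).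
rewrite !expr2 !exprS !expr0 in e0 e1 e2 e3 e4.
lra.
Qed.


Section Main.
Variables (m r : nat) (W : 'M[R]_m) (hW : W^T = W).

Definition cE (U : 'M[R]_(m, r)) := W - U *m U^T.
Definition cA (U V : 'M[R]_(m, r)) := U *m V^T + V *m U^T.
Definition cB (V : 'M[R]_(m, r)) := V *m V^T.
Definition c2F (U V : 'M[R]_(m, r)) := (ip (cA U V) (cA U V) - 2 * ip (cE U) (cB V)) / 2.
Definition GF (U : 'M[R]_(m, r)) := (-2) *: (cE U *m U).

Lemma cE_sym U : (cE U)^T = cE U.
Proof. by rewrite /cE linearB /= trmx_mul trmxK hW. Qed.

Lemma F_expand (U V : 'M[R]_(m, r)) (h : R) :
  F_obj W (h *: V + U) = ip (cE U) (cE U) / 2 + ip (GF U) V * h + c2F U V * h ^+ 2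
     + ip (cA U V) (cB V) * h ^+ 3 + ip (cB V) (cB V) / 2 * h ^+ 4.
Proof.
rewrite /F_obj frob_sq mx_expand ip_expand -/(cE U) -/(cA U V) -/(cB V).
have -> : ip (cE U) (cA U V) = - ip (GF U) V / 2 * 2.
  have t1 : ip (cE U) (U *m V^T) = ip (cE U) (V *m U^T).
    by rewrite -ip_tr trmx_mul trmxK cE_sym.
  rewrite /GF ipZl /cA ipDr t1 ip_mulr2 trmxK.
  by field.
by rewrite /c2F; field.
Qed.



Definition GP (U : 'M[R]_(m, r)) := (6 * ip U U + 2 * frob_norm W) *: U.

Lemma ipDD (U V : 'M[R]_(m, r)) (h : R) :
  ip (h *: V + U) (h *: V + U) = ip U U + 2 * ip U V * h + ip V V * h ^+ 2.
Proof. rewrite !(ipDl, ipDr, ipZl, ipZr) (ipC V U); ring. Qed.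

Lemma P_expand (U V : 'M[R]_(m, r)) (h : R) :
  psi_kernel W (h *: V + U) =
    (3 / 2 * ip U U ^+ 2 + frob_norm W * ip U U) + ip (GP U) V * h
    + (6 * ip U V ^+ 2 + 3 * ip U U * ip V V + frob_norm W * ip V V) * h ^+ 2
    + 6 * ip U V * ip V V * h ^+ 3 + 3 / 2 * ip V V ^+ 2 * h ^+ 4.
Proof.
rewrite /psi_kernel -[4%N]/(2 * 2)%N exprM frob_sq ipDD /GP ipZl.
by field.
Qed.

Lemma hess_bound (U V : 'M[R]_(m, r)) :
  `|2 * c2F U V| <= 6 * ip U U * ip V V + 2 * frob_norm W * ip V V.
Proof.
set s := ip U U; set q := ip V V; set w := frob_norm W.
have hs : 0 <= s := ip_ge0 U. have hq : 0 <= q := ip_ge0 V.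
have hw : 0 <= w := frob_ge0 W.
have -> : 2 * c2F U V = ip (cA U V) (cA U V) - 2 * ip W (cB V) + 2 * ip (U *m U^T) (cB V).
  by rewrite /c2F /cE ipBl; field.
set P1 := U *m V^T; set P2 := V *m U^T.
have hA0 : 0 <= ip (cA U V) (cA U V) := ip_ge0 _.
have hAle : ip (cA U V) (cA U V) <= 2 * ip P1 P1 + 2 * ip P2 P2.
  have := ip_ge0 (P1 - P2).
  rewrite /cA -/P1 -/P2 !(ipDl, ipDr, ipBl, ipBr, ipNl, ipNr) (ipC P2 P1); lra.
have h1 : ip P1 P1 <= s * q.
  have := ip_submul U V^T; rewrite ip_tr -/P1 -/s -/q //.
have h2 : ip P2 P2 <= q * s.
  have := ip_submul V U^T; rewrite ip_tr -/P2 -/s -/q //.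
have hSB : ip (U *m U^T) (cB V) = ip (V^T *m U) (V^T *m U).
  by rewrite /cB ip_mulr ipC mulmxA ip_mulr2 trmxK.
have hSB0 : 0 <= ip (U *m U^T) (cB V) by rewrite hSB ip_ge0.
have hSB1 : ip (U *m U^T) (cB V) <= q * s.
  have := ip_submul V^T U; rewrite ip_tr -/s -/q hSB //.
have hB : ip (cB V) (cB V) <= q * q.
  have := ip_submul V V^T; rewrite ip_tr -/q //.
have hWB : `|ip W (cB V)| <= w * q.
  have := ip_norm_le W (cB V); rewrite -/w => h.
  apply: (le_trans h); apply: ler_wpM2l => //.
  have hf := frob_ge0 (cB V); have := frob_sq (cB V) => e.
  rewrite -(ler_pXn2r (n := 2)) ?nnegrE // e.
  by rewrite expr2.
move: hWB; rewrite !ler_norml => /andP [hW1 hW2].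
apply/andP; split; nra.
Qed.



End Main.
Section Diff.
Variable (V : normedModType R).
Implicit Types (f g : V -> R) (x : V).

Lemma dD f g x : differentiable f x -> differentiable g x ->
  differentiable (fun y => f y + g y) x.
Proof. exact: differentiableD. Qed.
Lemma dM f g x : differentiable f x -> differentiable g x ->
  differentiable (fun y => f y * g y) x.
Proof. exact: differentiableM. Qed.
Lemma dN f x : differentiable f x -> differentiable (fun y => - f y) x.
Proof. exact: differentiableN. Qed.
Lemma dC (c : R) x : differentiable (fun _ : V => c) x.
Proof. exact: differentiable_cst. Qed.
Lemma dS (I : Type) (s : seq I) (P : pred I) (F : I -> V -> R) x :
  (forall i, differentiable (F i) x) ->
  differentiable (fun y => \sum_(i <- s | P i) F i y) x.
Proof.
move=> H; elim: s => [|a s IH].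
  have -> : (fun y => \sum_(i <- [::] | P i) F i y) = fun _ => 0.
    by apply: funext => y; rewrite big_nil.
  exact: dC.
case Pa: (P a).
  have -> : (fun y => \sum_(i <- a :: s | P i) F i y) =
     fun y => F a y + \sum_(i <- s | P i) F i y.
    by apply: funext => y; rewrite big_cons Pa.
  exact: dD.
have -> : (fun y => \sum_(i <- a :: s | P i) F i y) =
     fun y => \sum_(i <- s | P i) F i y.
  by apply: funext => y; rewrite big_cons Pa.
exact: IH.
Qed.
End Diff.

Lemma dF m r (W : 'M[R]_m) (Y : 'M[R]_(m, r)) : differentiable (F_obj W) Y.
Proof.
have -> : F_obj W = fun U : 'M[R]_(m, r) => 2^-1 * \sum_i \sum_j
   ((W i j - \sum_k U i k * U j k) * (W i j - \sum_k U i k * U j k)).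
  apply: funext => U; rewrite /F_obj frob_sq ipE; congr (_ * _).
  apply: eq_bigr => i _; apply: eq_bigr => j _; rewrite !mxE.
  by congr (_ * _); congr (_ - _); apply: eq_bigr => k _; rewrite !mxE.
apply: dM; first exact: dC.
apply: dS => i; apply: dS => j.
have hd : differentiable (fun U : 'M[R]_(m, r) => W i j - \sum_k U i k * U j k) Y.
  apply: dD; first exact: dC.
  apply: dN; apply: dS => k; apply: dM; exact: differentiable_coord.
exact: dM.
Qed.

Lemma dP m r (W : 'M[R]_m) (Y : 'M[R]_(m, r)) : differentiable (psi_kernel W) Y.
Proof.
have -> : psi_kernel W = fun U : 'M[R]_(m, r) => 3 / 2 * ((\sum_i \sum_j U i j * U i j)
   * (\sum_i \sum_j U i j * U i j)) + frob_norm W * (\sum_i \sum_j U i j * U i j).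
  apply: funext => U; rewrite /psi_kernel -[4%N]/(2 * 2)%N exprM frob_sq ipE.
  by rewrite expr2.
have hs : differentiable (fun U : 'M[R]_(m, r) => \sum_i \sum_j U i j * U i j) Y.
  apply: dS => i; apply: dS => j; apply: dM; exact: differentiable_coord.
apply: dD; apply: dM; try exact: dC; try exact: hs.
exact: dM.
Qed.

End Alg.

Unset Implicit Arguments. Set Strict Implicit.

Theorem proposition1 (R : realType) (m r : nat) (hm : (0 < m)%N) (hr : (0 < r)%N)
    (W : 'M[R]_m) (hW : W^T = W) (L : R) (hL : 1 <= L) :
  L_smad (F_obj W) (psi_kernel W) L [set: 'M[R]_(m, r)].
Proof.
split.
- exact: lt_le_trans ltr01 hL.
- exact: dF.
- exact: dP.
move=> X Y _ _.
rewrite /bregman (grad_poly (fun V h => F_expand hW Y V h))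
  (grad_poly (fun V h => P_expand W Y V h)).
set H := X - Y.
have eX : X = 1 *: H + Y by rewrite scale1r subrK.
have eY : Y = 0 *: H + Y by rewrite scale0r add0r.
have fX := F_expand hW Y H 1. have fY := F_expand hW Y H 0.
have pX := P_expand W Y H 1. have pY := P_expand W Y H 0.
rewrite -eX -eY in fX fY pX pY.
rewrite fX pX {1}fY {1}pY.
set Z := 2^-1 *: H + Y.
have ek : forall k : R, (k + 2^-1) *: H + Y = k *: H + Z.
  by move=> k; rewrite /Z scalerDl addrA.
have rel := @shift_coef R _ _ _ _ _ _ _ _ _ _ (fun k =>
  etrans (esym (F_expand hW Y H (k + 2^-1)))
    (etrans (congr1 (F_obj W) (ek k)) (F_expand hW Z H k))).
have hb1 := hess_bound W Y H.
have hb2 := hess_bound W Z H.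
have zz := ipDD Y H (2^-1); rewrite -/Z in zz.
have hq := ip_ge0 H. have hw := frob_ge0 W.
move: rel hb1 hb2 zz hq hw.
rewrite !expr1n !expr0n /= !mulr1 !mulr0 !addr0.
move: (c2F W Y H) (c2F W Z H) (frob_inner (cA Y H) (cB H)) (frob_inner (cB H) (cB H))
  (frob_inner Y Y) (frob_inner Y H) (frob_inner H H) (frob_inner Z Z) (frob_norm W).
move=> c2 d2 c3 c4 s p q z w rel hb1 hb2 zz hq hw.
move: hb1 hb2; rewrite !ler_norml => /andP [h1a h1b] /andP [h2a h2b].
set psi := 6 * p ^+ 2 + 3 * s * q + w * q + 6 * p * q + 3 / 2 * q ^+ 2.
have hpsi : (6 * s * q + 2 * w * q + 2 * (6 * z * q + 2 * w * q)) / 6 <= psi.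
  rewrite zz /psi.
  have := sqr_ge0 (p + q / 3); nra.
have psi0 : 0 <= psi by lra.
have Lpsi : psi <= L * psi.
  have : 0 <= (L - 1) * psi by apply: mulr_ge0 => //; lra.
  lra.
have e : c2 + c3 + c4 / 2 = (2 * c2 + 4 * d2) / 6 by rewrite -rel; field.
apply/andP; split.
  have : - psi <= c2 + c3 + c4 / 2 by lra.
  move: Lpsi; rewrite /psi; nra.
have : c2 + c3 + c4 / 2 <= psi by lra.
move: Lpsi; rewrite /psi; nra.
Qed.
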